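(* Let $v=(x,y,z)^T\in\mathbb{O}^3$ with associator $[v]:=[x,y,z]\neq 0$. If there exists a $3\times3$ Hermitian octonionic matrix $A$ with $Av=v[v]$, then $\operatorname{Re}(x)=\operatorname{Re}(y)=\operatorname{Re}(z)=0$, i.e. $\operatorname{Re}(v)=0$.
   Context: $\mathbb{O}$ denotes the real octonions (8-dimensional normed division algebra, nonassociative). For $w\in\mathbb{O}$, $\operatorname{Re}(w)$ is its real part. The associator is $[x,y,z]=(xy)z-x(yz)$. A $3\times3$ Hermitian octonionic matrix has the form $A=\begin{pmatrix} p & a & \bar c\\ \bar a & m & b\\ c & \bar b & n\end{pmatrix}$ with $p,m,n\in\mathbb{R}$, $a,b,c\in\mathbb{O}$. $Av$ has components $\sum_j A_{ij}v_j$ (octonionic products) and $v[v]=(x[v],y[v],z[v])^T$; thus $Av=v[v]$ means $px+ay+\bar c z = x[v]$, $\bar a x+my+bz=y[v]$, $cx+\bar b y+nz=z[v]$. *)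

(* Defs.v *)
From Stdlib Require Import Reals.
Open Scope R_scope.

(* Quaternions a + b i + c j + d k *)
Record quat : Type := Quat { q0 : R; q1 : R; q2 : R; q3 : R }.

Definition qadd (p q : quat) : quat :=
  Quat (q0 p + q0 q) (q1 p + q1 q) (q2 p + q2 q) (q3 p + q3 q).
Definition qopp (p : quat) : quat :=
  Quat (- q0 p) (- q1 p) (- q2 p) (- q3 p).
Definition qconj (p : quat) : quat :=
  Quat (q0 p) (- q1 p) (- q2 p) (- q3 p).
(* Hamilton product, i^2 = j^2 = k^2 = ijk = -1 *)
Definition qmul (p q : quat) : quat :=
  Quat (q0 p * q0 q - q1 p * q1 q - q2 p * q2 q - q3 p * q3 q)
       (q0 p * q1 q + q1 p * q0 q + q2 p * q3 q - q3 p * q2 q)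
       (q0 p * q2 q - q1 p * q3 q + q2 p * q0 q + q3 p * q1 q)
       (q0 p * q3 q + q1 p * q2 q - q2 p * q1 q + q3 p * q0 q).

(* Octonions as pairs of quaternions (Cayley-Dickson):
   (a,b)(c,d) = (ac - conj(d) b, d a + b conj(c)),  conj(a,b) = (conj a, -b). *)
Record oct : Type := Oct { ofst : quat; osnd : quat }.

Definition oadd (x y : oct) : oct :=
  Oct (qadd (ofst x) (ofst y)) (qadd (osnd x) (osnd y)).
Definition oopp (x : oct) : oct := Oct (qopp (ofst x)) (qopp (osnd x)).
Definition osub (x y : oct) : oct := oadd x (oopp y).
Definition omul (x y : oct) : oct :=
  Oct (qadd (qmul (ofst x) (ofst y)) (qopp (qmul (qconj (osnd y)) (osnd x))))
      (qadd (qmul (osnd y) (ofst x)) (qmul (osnd x) (qconj (ofst y)))).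
Definition oconj (x : oct) : oct := Oct (qconj (ofst x)) (qopp (osnd x)).

Definition oreal (r : R) : oct := Oct (Quat r 0 0 0) (Quat 0 0 0 0).
Definition ozero : oct := oreal 0.

Definition oRe (x : oct) : R := q0 (ofst x).

Definition assoc (x y z : oct) : oct :=
  osub (omul (omul x y) z) (omul x (omul y z)).

(* A v = v [v] for the Hermitian matrix
     A = [[p, a, conj c], [conj a, m, b], [c, conj b, n]],  p m n real. *)
Definition herm_eigen (p m n : R) (a b c x y z : oct) : Prop :=
  let w := assoc x y z in
  oadd (oadd (omul (oreal p) x) (omul a y)) (omul (oconj c) z) = omul x w /\
  oadd (oadd (omul (oconj a) x) (omul (oreal m) y)) (omul b z) = omul y w /\
  oadd (oadd (omul c x) (omul (oconj b) y)) (omul (oreal n) z) = omul z w.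

(* Main.v *)
Require Import Defs.
From Stdlib Require Import Reals.
Open Scope R_scope.
From Stdlib Require Import Lra Psatz.

(* Proof idea: the test vector
   U = ( |x|^2 z - <x,z> x , <x,z> y - (y conj z) x , <x,z> z - |z|^2 x )
   is orthogonal (for the real inner product) to A v for every Hermitian A,
   while <U, v [v]> = Re(y) |[v]|^2.  Cyclic symmetry handles x and z. *)

Definition dot (a b : oct) : R :=
  q0 (ofst a) * q0 (ofst b) + q1 (ofst a) * q1 (ofst b) + q2 (ofst a) * q2 (ofst b) + q3 (ofst a) * q3 (ofst b) +
  q0 (osnd a) * q0 (osnd b) + q1 (osnd a) * q1 (osnd b) + q2 (osnd a) * q2 (osnd b) + q3 (osnd a) * q3 (osnd b).
Definition osc (r : R) (a : oct) : oct := omul (oreal r) a.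
Definition U1 (x y z : oct) := osub (osc (dot x x) z) (osc (dot x z) x).
Definition U2 (x y z : oct) := osub (osc (dot x z) y) (omul (omul y (oconj z)) x).
Definition U3 (x y z : oct) := osub (osc (dot x z) z) (osc (dot z z) x).

Ltac dest := repeat match goal with
  | o : oct |- _ => let a0 := fresh "r" in let a1 := fresh "r" in let a2 := fresh "r" in let a3 := fresh "r" in let a4 := fresh "r" in let a5 := fresh "r" in let a6 := fresh "r" in let a7 := fresh "r" in destruct o as [[a0 a1 a2 a3] [a4 a5 a6 a7]]
  end.
Ltac unf := cbv beta iota delta [dot U1 U2 U3 osc osub oadd oopp omul oconj oreal ozero assoc qadd qmul qopp qconj ofst osnd q0 q1 q2 q3].
Ltac oring := dest; unf; ring.
Ltac oeq := dest; unf; f_equal; f_equal; ring.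

Lemma offa (x y z : oct) : oadd (omul (U1 x y z) (oconj y)) (oconj (omul (U2 x y z) (oconj x))) = ozero.
Proof. oeq. Qed.
Lemma offb (x y z : oct) : oadd (omul (U2 x y z) (oconj z)) (oconj (omul (U3 x y z) (oconj y))) = ozero.
Proof. oeq. Qed.
Lemma offc (x y z : oct) : oadd (oconj (omul (U1 x y z) (oconj z))) (omul (U3 x y z) (oconj x)) = ozero.
Proof. oeq. Qed.
Lemma diag1 (x y z : oct) : dot (U1 x y z) x = 0.
Proof. oring. Qed.
Lemma diag2 (x y z : oct) : dot (U2 x y z) y = 0.
Proof. oring. Qed.
Lemma diag3 (x y z : oct) : dot (U3 x y z) z = 0.
Proof. oring. Qed.

Lemma dot_add_r u a b : dot u (oadd a b) = dot u a + dot u b.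
Proof. oring. Qed.
Lemma dot_add_l u a b : dot (oadd a b) u = dot a u + dot b u.
Proof. oring. Qed.
Lemma dot_sub_r u a b : dot u (osub a b) = dot u a - dot u b.
Proof. oring. Qed.
Lemma dot_sub_l u a b : dot (osub a b) u = dot a u - dot b u.
Proof. oring. Qed.
Lemma dot_sc_r u p a : dot u (omul (oreal p) a) = p * dot u a.
Proof. oring. Qed.
Lemma dot_sc_l u p a : dot (osc p a) u = p * dot a u.
Proof. oring. Qed.
Lemma dot0 u : dot ozero u = 0.
Proof. oring. Qed.
Lemma dot_sym a b : dot a b = dot b a.
Proof. oring. Qed.
Lemma dR u a v : dot u (omul a v) = dot (omul u (oconj v)) a.
Proof. oring. Qed.
Lemma dL u a v : dot u (omul a v) = dot (omul (oconj a) u) v.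
Proof. oring. Qed.
Lemma dC u a : dot u (oconj a) = dot (oconj u) a.
Proof. oring. Qed.

Lemma reassoc (x y z : oct) : q0 (ofst (assoc x y z)) = 0.
Proof. oring. Qed.
Lemma dot_self_mul (a W : oct) : dot a (omul a W) = dot a a * q0 (ofst W).
Proof. oring. Qed.
Lemma dot_W_yW (y W : oct) : dot W (omul y W) = q0 (ofst y) * dot W W.
Proof. oring. Qed.
Lemma dot_mul_same_l (y a b : oct) : dot (omul y a) (omul y b) = dot y y * dot a b.
Proof. oring. Qed.
Lemma dot_mul_same_r (z a b : oct) : dot (omul a z) (omul b z) = dot z z * dot a b.
Proof. oring. Qed.
Lemma leftalt (a b : oct) : omul a (omul a b) = omul (omul a a) b.
Proof. oeq. Qed.
Lemma conj_assoc (x y z : oct) : oconj (assoc x y z) = oopp (assoc x y z).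
Proof. oeq. Qed.
Lemma dot_opp_r a b : dot a (oopp b) = - dot a b.
Proof. oring. Qed.
Lemma dot_opp_l a b : dot (oopp a) b = - dot a b.
Proof. oring. Qed.
Lemma conj_mul a b : oconj (omul a b) = omul (oconj b) (oconj a).
Proof. oeq. Qed.
Lemma yzx (x y z : oct) : omul (omul y (oconj z)) x = osub (omul y (omul (oconj z) x)) (assoc x y z).
Proof. oeq. Qed.
Lemma cyc1 (x y z : oct) : assoc y z x = assoc x y z.
Proof. oeq. Qed.
Lemma rot3 (A B C : oct) : oadd (oadd A B) C = oadd (oadd C A) B.
Proof. oeq. Qed.

Lemma orthA (x y z : oct) : dot (omul (oconj x) z) (assoc x y z) = 0.
Proof.
  unfold assoc at 1. rewrite dot_sub_r.
  rewrite dot_mul_same_r.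
  rewrite (dL _ x (omul y z)), leftalt, dot_mul_same_r.
  rewrite (dL (oconj x) x y). ring.
Qed.

Lemma orthB (x y z : oct) : dot (omul (oconj z) x) (assoc x y z) = 0.
Proof.
  assert (E : omul (oconj z) x = oconj (omul (oconj x) z)).
  { rewrite conj_mul. f_equal. oeq. }
  rewrite E, dot_sym, dC, conj_assoc, dot_opp_l, dot_sym, orthA. ring.
Qed.

Lemma T1 (x y z : oct) : dot (U1 x y z) (omul x (assoc x y z)) = 0.
Proof.
  unfold U1 at 1. rewrite dot_sub_l, !dot_sc_l.
  rewrite dot_self_mul, reassoc, dL, orthA. ring.
Qed.
Lemma T3 (x y z : oct) : dot (U3 x y z) (omul z (assoc x y z)) = 0.
Proof.
  unfold U3 at 1. rewrite dot_sub_l, !dot_sc_l.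
  rewrite dot_self_mul, reassoc, (dL x), orthB. ring.
Qed.
Lemma T2 (x y z : oct) : dot (U2 x y z) (omul y (assoc x y z)) = q0 (ofst y) * dot (assoc x y z) (assoc x y z).
Proof.
  unfold U2 at 1. rewrite dot_sub_l, !dot_sc_l.
  rewrite dot_self_mul, reassoc.
  rewrite yzx, dot_sub_l, dot_mul_same_l, orthB, dot_W_yW. ring.
Qed.

Lemma dot_pos (a : oct) : a <> ozero -> dot a a <> 0.
Proof.
  intros Ha H. apply Ha. dest. unfold dot in H; simpl in H.
  assert (r = 0) by nra. assert (r0 = 0) by nra. assert (r1 = 0) by nra. assert (r2 = 0) by nra.
  assert (r3 = 0) by nra. assert (r4 = 0) by nra. assert (r5 = 0) by nra. assert (r6 = 0) by nra.
  subst. reflexivity.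
Qed.

Lemma core (p m n : R) (a b c x y z : oct) :
  oadd (oadd (omul (oreal p) x) (omul a y)) (omul (oconj c) z) = omul x (assoc x y z) ->
  oadd (oadd (omul (oconj a) x) (omul (oreal m) y)) (omul b z) = omul y (assoc x y z) ->
  oadd (oadd (omul c x) (omul (oconj b) y)) (omul (oreal n) z) = omul z (assoc x y z) ->
  assoc x y z <> ozero -> q0 (ofst y) = 0.
Proof.
  intros H1 H2 H3 Hw.
  apply (f_equal (dot (U1 x y z))) in H1.
  apply (f_equal (dot (U2 x y z))) in H2.
  apply (f_equal (dot (U3 x y z))) in H3.
  rewrite T1 in H1. rewrite T2 in H2. rewrite T3 in H3.
  rewrite !dot_add_r, !dot_sc_r in H1, H2, H3.
  rewrite diag1 in H1. rewrite diag2 in H2. rewrite diag3 in H3.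
  assert (Ea : dot (U1 x y z) (omul a y) + dot (U2 x y z) (omul (oconj a) x) = 0).
  { rewrite dR, (dR _ (oconj a)), dC, <- dot_add_l, offa, dot0. reflexivity. }
  assert (Eb : dot (U2 x y z) (omul b z) + dot (U3 x y z) (omul (oconj b) y) = 0).
  { rewrite dR, (dR _ (oconj b)), (dC _ b), <- dot_add_l, offb, dot0. reflexivity. }
  assert (Ec : dot (U1 x y z) (omul (oconj c) z) + dot (U3 x y z) (omul c x) = 0).
  { rewrite dR, (dR _ c), dC, <- dot_add_l, offc, dot0. reflexivity. }
  assert (Hn := dot_pos _ Hw).
  assert (E : q0 (ofst y) * dot (assoc x y z) (assoc x y z) = 0) by lra.
  apply Rmult_integral in E. destruct E as [E|E]; [exact E | contradiction].
Qed.

Theorem theorem1 (x y z : oct) :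
  assoc x y z <> ozero ->
  (exists (p m n : R) (a b c : oct), herm_eigen p m n a b c x y z) ->
  oRe x = 0 /\ oRe y = 0 /\ oRe z = 0.
Proof.
  intros Hw [p [m [n [a [b [c H]]]]]].
  unfold herm_eigen in H. destruct H as [H1 [H2 H3]].
  unfold oRe. split; [|split].
  - apply (core n p m c a b z x y).
    + rewrite rot3 in H3. rewrite (cyc1 z x y) in H3. exact H3.
    + rewrite rot3 in H1. rewrite (cyc1 z x y) in H1. exact H1.
    + rewrite rot3 in H2. rewrite (cyc1 z x y) in H2. exact H2.
    + rewrite (cyc1 z x y) in Hw. exact Hw.
  - exact (core p m n a b c x y z H1 H2 H3 Hw).
  - apply (core m n p b c a y z x).
    + rewrite rot3, rot3 in H2. rewrite (cyc1 x y z). exact H2.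
    + rewrite rot3, rot3 in H3. rewrite (cyc1 x y z). exact H3.
    + rewrite rot3, rot3 in H1. rewrite (cyc1 x y z). exact H1.
    + rewrite (cyc1 x y z). exact Hw.
Qed.
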